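(* Let $G$ be a connected threshold graph of order $n\ge 4$ and size $m$ with $n-1<m<\binom{n}{2}$, let $c$ be its number of type 1 vertices, $(b_1,\ldots,b_z)$ its backwards zero position sequence and $F_1=\sum_{i=1}^z b_i^2$. Let $\xi\in\mathbb{R}$ be the greatest real root of $P(x)=x^3-(c+1)x^2+cx-F_1$. Then $\xi$ is a simple root of $P$ and $|\xi|>|\eta|$ for every other (complex) root $\eta$ of $P$.
   Context: A threshold graph is a simple graph whose vertices can be ordered $v_1,\ldots,v_n$ so that for each $2\le i\le n$, $v_i$ is either adjacent to all of $v_1,\ldots,v_{i-1}$ (then $a_i=1$) or to none of them (then $a_i=0$); by convention $a_1=1$. Vertex $v_i$ is of type 1 if $a_i=1$ and of type 0 if $a_i=0$; $c$ and $z$ are the numbers of type 1 and type 0 vertices (here $c \ge 3$, $z\ge 1$). The backwards zero position sequence $(b_1,\ldots,b_z)$ is defined by letting $b_i$ be the number of type 1 vertices appearing after the $i$-th type 0 vertex in the order $v_1,\ldots,v_n$. *)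

(* Defs.v *)
From HB Require Import structures.
From mathcomp Require Import all_boot all_order all_algebra.
From mathcomp Require Import complex.
Set Implicit Arguments. Unset Strict Implicit. Unset Printing Implicit Defensive.
Import Order.TTheory GRing.Theory Num.Theory.

(* A threshold graph is encoded by its creation sequence a = [a_1; ...; a_n]
   (as a seq bool, a_1 = true by convention).  Vertex v_(i+1) is the ordinal
   i : 'I_(size a) (0-based). *)

Definition thr_adj (a : seq bool) : rel 'I_(size a) :=
  fun i j => ((i < j) && nth false a j) || ((j < i) && nth false a i).

Arguments thr_adj : clear implicits.

Definition creation_seq (a : seq bool) : Prop := nth false a 0 = true.

Definition thr_order (a : seq bool) : nat := size a.

Definition thr_size (a : seq bool) : nat :=
  #|[set p : 'I_(size a) * 'I_(size a) | (p.1 < p.2) && thr_adj a p.1 p.2]|.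

Definition thr_connected (a : seq bool) : Prop :=
  forall x y : 'I_(size a), connect (thr_adj a) x y.

Definition thr_c (a : seq bool) : nat := count id a.

(* backwards zero position sequence: the type-0 vertex at (0-based) position j
   contributes b = number of type 1 vertices after it, i.e. count id (drop j.+1 a). *)
Definition thr_F1 (a : seq bool) : nat :=
  \sum_(j < size a | ~~ nth false a j) (count id (drop j.+1 a)) ^ 2.

Local Open Scope ring_scope.

Definition thr_poly (R : rcfType) (a : seq bool) : {poly R} :=
  'X^3 - ((thr_c a).+1)%:R *: 'X^2 + (thr_c a)%:R *: 'X - ((thr_F1 a)%:R)%:P.

(* Main.v *)
Require Import Defs.
From HB Require Import structures.
From mathcomp Require Import all_boot all_order all_algebra.
From mathcomp Require Import complex.
From mathcomp Require Import zify ring lra.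
Import Order.TTheory GRing.Theory Num.Theory.

Lemma card_lt_pairs n : #|[set p : 'I_n * 'I_n | p.1 < p.2]| = 'C(n, 2).
Proof.
rewrite -sum1_card.
rewrite (eq_bigl (fun p : 'I_n * 'I_n => p.1 < p.2)); last by move=> p; rewrite inE.
rewrite big_mkcond /= -(pair_big xpredT xpredT (fun i j : 'I_n => if i < j then 1 else 0)) /=.
rewrite exchange_big /= -bin2_sum big_mkord.
apply: eq_bigr => j _.
rewrite -(big_mkord xpredT (fun i => if i < j then 1 else 0)).
rewrite (@big_cat_nat _ _ _ j) ?(ltnW (ltn_ord j)) //=.
rewrite big_nat_cond (eq_bigr (fun=> 1)); last by move=> i /andP[/andP[_ ->]].
rewrite -big_nat_cond sum_nat_const_nat muln1 subn0.
rewrite big_nat_cond big1 ?addn0 //.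
by move=> i /andP[/andP[ji _] _]; rewrite ltnNge ji.
Qed.

Lemma connect_noout (T : finType) (e : rel T) x y :
  (forall z, e x z = false) -> connect e x y -> y = x.
Proof.
move=> h /connectP[[|z s] /= p ->] //.
by move: p; rewrite h.
Qed.

Lemma F1_pos (a : seq bool) :
  creation_seq a -> thr_connected a -> (4 <= thr_order a)%N ->
  (thr_size a < 'C(thr_order a, 2))%N -> (0 < thr_F1 a)%N.
Proof.
rewrite /creation_seq /thr_connected /thr_order => a0 conn n4 msz.
have ln : ((size a).-1 < size a)%N by lia.
have last1 : nth false a (size a).-1.
  apply/negPn/negP => hl.
  have l0 : (0 < size a)%N by lia.
  have := @connect_noout _ (thr_adj a) (Ordinal ln) (Ordinal l0) _ (conn _ _).
  have H : forall z, thr_adj a (Ordinal ln) z = false.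
    case=> z zn; rewrite /thr_adj /= (negbTE hl) andbF orbF.
    have -> : ((size a).-1 < z) = false by apply/negbTE; rewrite -leqNgt; lia.
    done.
  move=> /(_ H) /(congr1 val) /=; lia.
have [j0 hj0] : exists j : 'I_(size a), ~~ nth false a j.
  case: (boolP [exists j : 'I_(size a), ~~ nth false a j]) => [/existsP//|/existsPn H].
  exfalso; move: msz; rewrite /thr_size.
  have -> : [set p : 'I_(size a) * 'I_(size a) | (p.1 < p.2)%N && thr_adj a p.1 p.2]
         = [set p : 'I_(size a) * 'I_(size a) | (p.1 < p.2)%N].
    apply/setP => p; rewrite !inE /thr_adj.
    case: (ltnP p.1 p.2) => //= h12.
    by have := H p.2; rewrite negbK => ->.
  by rewrite card_lt_pairs ltnn.
have j0l : (j0 < (size a).-1)%N.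
  have := ltn_ord j0; rewrite leq_eqVlt => /orP[/eqP e|]; last by lia.
  move: hj0 last1; have -> : nat_of_ord j0 = (size a).-1 by lia.
  by move=> /negbTE ->.
rewrite /thr_F1 (bigD1 j0 hj0) /=.
suff : (0 < count id (drop j0.+1 a))%N by move=> h; rewrite addn_gt0 expn_gt0 h.
rewrite -has_count; apply/hasP; exists true => //.
have -> : true = nth false (drop j0.+1 a) ((size a).-1 - j0.+1) by rewrite nth_drop subnKC.
apply: mem_nth; rewrite size_drop; move: j0l n4; move: (nat_of_ord j0) => k; move: (size a) => m; lia.
Qed.

Local Open Scope ring_scope.
Section Alg1.
Variable R : rcfType.
Definition Pcf (c F : nat) : {poly R} :=
  'X^3 - (c.+1)%:R *: 'X^2 + c%:R *: 'X - ((F%:R)%:P).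

Lemma hornerPcf c F x : (Pcf c F).[x] = x^+3 - (c%:R + 1) * x^+2 + c%:R * x - F%:R.
Proof. rewrite /Pcf !hornerE /= -natr1. done. Qed.

Lemma Pcf_factor c F (xi : R) : (Pcf c F).[xi] = 0 ->
  Pcf c F = ('X - xi%:P) * ('X^2 + (xi - c%:R - 1) *: 'X + (xi^+2 - (c%:R+1)*xi + c%:R)%:P).
Proof.
rewrite hornerPcf => h.
have hF : (F%:R : R) = xi^+3 - (c%:R + 1) * xi^+2 + c%:R * xi by lra.
rewrite /Pcf hF -natr1 -!mul_polyC !(rmorphD, rmorphB, rmorphM, rmorph1, rmorphN) /=.
ring.
Qed.
End Alg1.
Section Alg.
Variable R : rcfType.

Lemma xi_big c F (xi : R) : (0 < F)%N -> root (Pcf R c F) xi ->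
  (forall x, root (Pcf R c F) x -> x <= xi) -> 1 < xi /\ c%:R < xi.
Proof.
move=> F0 rxi hmax.
have hF : (1 : R) <= F%:R by rewrite ler1n.
have hc : (0 : R) <= c%:R by [].
have [a [a1 ac ac1 aP]] : exists a : R, [/\ 1 <= a, c%:R <= a, a <= c%:R + 1 & (Pcf R c F).[a] < 0].
  have [->|cpos] := posnP c.
    exists 1; split; rewrite ?hornerPcf; lra.
  have c1 : (1 : R) <= c%:R by rewrite ler1n.
  exists c%:R; split; rewrite ?hornerPcf; set C := c%:R; nra.
set b : R := c%:R + F%:R + 1.
have bP : 0 <= (Pcf R c F).[b].
  rewrite hornerPcf /b.
  set C : R := c%:R; set G : R := F%:R.
  have -> : (C + G + 1) ^+ 3 - (C + 1) * (C + G + 1) ^+ 2 + C * (C + G + 1) - G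
     = (C + G + 1) * (C + G) * (G + 1) - G by ring.
  have h1 : 1 <= (C + G + 1) * (C + G) by nra.
  nra.
have ab : a <= b by rewrite /b; lra.
have [x0 /andP[ax0 x0b] rx0] := poly_ivt ab (introT andP (conj (ltW aP) bP)).
have x0a : a < x0.
  rewrite lt_neqAle ax0 andbT; apply/negP => /eqP ea.
  by move: rx0; rewrite /root -ea (lt_eqF aP).
have := hmax _ rx0; lra.
Qed.

Lemma alg_main c F (xi : R) : (0 < F)%N -> root (Pcf R c F) xi ->
  (forall x, root (Pcf R c F) x -> x <= xi) ->
  ~~ (('X - xi%:P) ^+ 2 %| Pcf R c F) /\
  (forall eta : R[i], root (map_poly (real_complex R) (Pcf R c F)) eta ->
     eta != real_complex R xi -> `|eta| < `|real_complex R xi|).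
Proof.
move=> F0 rxi hmax.
have [x1 xc] := @xi_big c F xi F0 rxi hmax.
have hc : (0 : R) <= c%:R by [].
have hF : (1 : R) <= F%:R by rewrite ler1n.
have fac := @Pcf_factor R c F xi (rootP rxi).
set p := xi - c%:R - 1 in fac.
set q := xi ^+ 2 - (c%:R + 1) * xi + c%:R in fac.
split.
  rewrite fac expr2 dvdp_mul2l ?polyXsubC_eq0 // dvdp_XsubCl /root.
  have -> : ('X^2 + p *: 'X + q%:P).[xi] = xi^+2 + p * xi + q by rewrite !hornerE.
  apply/negP => /eqP h.
  have : 0 < (xi - 1) * (xi - c%:R) + xi * (xi - c%:R) + xi * (xi - 1) by nra.
  rewrite /p /q in h; move: h; set C := c%:R => h. nra.
have pE : p = xi - c%:R - 1 by [].
have qE : q = xi ^+ 2 - (c%:R + 1) * xi + c%:R by [].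
clearbody p q.
move=> eta; rewrite fac rmorphM /= rootM map_polyXsubC /root.
have -> : (map_poly (real_complex R) ('X^2 + p *: 'X + q%:P)).[eta] = eta^+2 + (p%:C)%C * eta + (q%:C)%C.
  by rewrite !rmorphD /= map_polyXn map_polyZ map_polyX map_polyC !hornerD hornerXn hornerZ hornerX hornerC.
rewrite hornerXsubC subr_eq0 => /orP[/eqP->|]; first by rewrite eqxx.
case: eta => a b.
have -> : ((a +i* b) ^+ 2 + p%:C * (a +i* b) + q%:C)%C = ((a*a - b*b + p*a + q) +i* (a*b + b*a + p*b))%C.
  rewrite expr2 /= -!complexr0; simpc; apply/eqP; rewrite eq_complex /=.
  by rewrite !eqxx.
move=> /eqP[hre him] hne.
rewrite !normc_def /= ltcR ltr_sqrt; last by nra.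
have [b0|b0] := eqVneq b 0.
  subst b.
  have ra : root (Pcf R c F) a.
    apply/rootP; rewrite fac hornerM hornerXsubC !hornerD hornerXn hornerZ hornerX hornerC.
    have -> : a ^+ 2 + p * a + q = 0 by rewrite expr2; lra.
    by rewrite mulr0.
  have axi := hmax _ ra.
  have a0 : 0 < a.
    rewrite ltNge; apply/negP => a0.
    move/rootP: ra; rewrite hornerPcf; set C := c%:R => ra.
    have : 0 <= - a ^+ 3 by nra.
    have : 0 <= (C + 1) * a ^+ 2 by nra.
    nra.
  have axi' : a != xi by apply: contraNneq hne => ->.
  have : a < xi by rewrite lt_neqAle axi' axi.
  nra.
have h2 : 2 * a + p = 0.
  apply: (mulIf b0); rewrite mul0r; lra.
subst p q; set C := c%:R in h2 hre *.
nra.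

Qed.
End Alg.

Theorem lemma4p3 (R : rcfType) (a : seq bool) (xi : R) :
  creation_seq a ->
  thr_connected a ->
  (4 <= thr_order a)%N ->
  (thr_order a - 1 < thr_size a)%N ->
  (thr_size a < 'C(thr_order a, 2))%N ->
  root (thr_poly R a) xi ->
  (forall x : R, root (thr_poly R a) x -> x <= xi) ->
  ~~ (('X - xi%:P) ^+ 2 %| thr_poly R a) /\
  (forall eta : R[i], root (map_poly (real_complex R) (thr_poly R a)) eta ->
     eta != real_complex R xi -> `|eta| < `|real_complex R xi|).
Proof.
move=> cs conn n4 _ msz rxi hmax.
have F0 := @F1_pos a cs conn n4 msz.
exact: (@alg_main R (thr_c a) (thr_F1 a) xi F0 rxi hmax).
Qed.
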